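(* Let $\mu_1<\mu_2$ and $\sigma>0$ be real numbers, put $\theta^*=\frac{\mu_1+\mu_2}{2}$ and $x=\frac{\mu_2-\mu_1}{2\sigma}>0$. For $\theta\in\mathbb{R}$ let $\Delta=\theta-\theta^*$, and let $\pi_+(\theta)=\frac{e^{\Delta(\mu_2-\mu_1)/\sigma^2}}{1+e^{\Delta(\mu_2-\mu_1)/\sigma^2}}$ and $\pi_-(\theta)=1-\pi_+(\theta)$. Let $Q_\theta$ be the law of $X$ where $P(Y=+1)=\pi_+(\theta)$, $P(Y=-1)=\pi_-(\theta)$, $X\mid Y=+1\sim\mathcal N(\mu_1,\sigma^2)$ and $X\mid Y=-1\sim\mathcal N(\mu_2,\sigma^2)$. (Thus $\theta$ is exactly the Bayes-optimal decision threshold $\theta^*+\frac{\sigma^2}{\mu_2-\mu_1}\log\frac{\pi_+(\theta)}{\pi_-(\theta)}$ for $Q_\theta$.) Define $$\hat\mu_L(\theta)=\mathbb E_{Q_\theta}[X\mid X<\theta],\qquad \hat\mu_R(\theta)=\mathbb E_{Q_\theta}[X\mid X>\theta],\qquad g(\theta)=\frac{\hat\mu_L(\theta)+\hat\mu_R(\theta)}{2}.$$ Then $g(\theta^* )=\theta^*$, $g$ is differentiable at $\theta^*$, and $$g'(\theta^* )=C(x):=\bigl(2\varphi(x)+2x\Phi(x)\bigr)\bigl(2\varphi(x)-2x\Phi(-x)\bigr)=4\Bigl(\varphi(x)^2+\varphi(x)\,x\,(2\Phi(x)-1)-x^2\Phi(x)(1-\Phi(x))\Bigr),$$ which satisfies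 $0<C(x)\le \frac{2}{\pi}<1$ for all $x\ge 0$, with maximum value $\frac{2}{\pi}$ attained at $x=0$. Consequently, for every $c\in(2/\pi,1)$ there is $\delta>0$ such that $|\theta-\theta^*|<\delta$ implies $|g(\theta)-\theta^*|\le c\,|\theta-\theta^*|$; i.e. the iteration $\hat\theta_{t+1}=g(\hat\theta_t)$ converges linearly to $\theta^*$ once $\hat\theta_t$ is sufficiently close to $\theta^*$, with asymptotic rate at most $2/\pi$.
   Context: $\Phi$ denotes the standard normal cumulative distribution function and $\varphi(u)=\frac{1}{\sqrt{2\pi}}e^{-u^2/2}$ its density. The map $g$ models one step of balanced sampling with pseudo-labels: given the current decision boundary $\hat\theta_t$ (which is biased by the label imbalance $\pi_+/\pi_-$ of the current sample), the data are split by $\hat\theta_t$ into two pseudo-classes, the mean of each pseudo-class is estimated, and the new boundary $\hat\theta_{t+1}$ is the midpoint of these two estimated means. The paper phrases the result as: if $|\hat\theta_T-\theta^*|\ll|\mu_2-\mu_1|$ and $|(\hat\theta_T-\theta^* )(\mu_2-\mu_1)|\ll\sigma^2$, then $|\hat\theta_{t+1}-\theta^*|\le C|\hat\theta_t-\theta^*|$ for $t\ge T$ with $C=2/\pi$, understood to first order in $\hat\theta_t-\theta^*$. *)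

(* Defs.v *)
From Stdlib Require Import Reals.
From Coquelicot Require Import Coquelicot.
Open Scope R_scope.

Definition phi (u : R) : R := / sqrt (2 * PI) * exp (- u ^ 2 / 2).
Definition Phi (x : R) : R := RInt_gen phi (Rbar_locally m_infty) (at_point x).

Definition npdf (m s u : R) : R := / s * phi ((u - m) / s).

Section Model.
Variables mu1 mu2 sigma : R.

Definition theta_star : R := (mu1 + mu2) / 2.

Definition pi_plus (theta : R) : R :=
  let a := (theta - theta_star) * (mu2 - mu1) / sigma ^ 2 in
  exp a / (1 + exp a).
Definition pi_minus (theta : R) : R := 1 - pi_plus theta.

Definition qdens (theta u : R) : R :=
  pi_plus theta * npdf mu1 sigma u + pi_minus theta * npdf mu2 sigma u.

Definition muL (theta : R) : R :=
  RInt_gen (fun u => u * qdens theta u) (Rbar_locally m_infty) (at_point theta)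
  / RInt_gen (qdens theta) (Rbar_locally m_infty) (at_point theta).

Definition muR (theta : R) : R :=
  RInt_gen (fun u => u * qdens theta u) (at_point theta) (Rbar_locally p_infty)
  / RInt_gen (qdens theta) (at_point theta) (Rbar_locally p_infty).

Definition g (theta : R) : R := (muL theta + muR theta) / 2.
End Model.

Definition Crate (x : R) : R :=
  (2 * phi x + 2 * x * Phi x) * (2 * phi x - 2 * x * Phi (- x)).

(* Main.v *)
Require Import Defs.
From Stdlib Require Import Reals Lra.
From Coquelicot Require Import Coquelicot.
Open Scope R_scope.


Definition ge (t : R) := exp (- (t ^ 2)).
Definition Gi (x : R) := RInt ge 0 x.
Definition uu (x t : R) := exp (- (x ^ 2 * (1 + t ^ 2))) / (1 + t ^ 2).
Definition Ii (x : R) := RInt (uu x) 0 1.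

Lemma exd_cont (f : R -> R) x : ex_derive f x -> continuous f x.
Proof. intros H; exact (ex_derive_continuous f x H). Qed.

Lemma exRc (f : R -> R) a b : (forall z, Rmin a b <= z <= Rmax a b -> continuous f z) -> ex_RInt f a b.
Proof. intros H; exact (@ex_RInt_continuous R_CompleteNormedModule f a b H). Qed.

Lemma RInt_correctR (f : R -> R) a b : ex_RInt f a b -> is_RInt f a b (RInt f a b).
Proof. exact (@RInt_correct R_CompleteNormedModule f a b). Qed.

Ltac rtype := match goal with |- @eq _ ?a ?b => change (@eq R a b) end.

Ltac fix_exp := repeat match goal with |- context [exp ?a] => match goal with |- context [exp ?b] => assert_fails (constr_eq a b); replace a with b by (field; repeat split; try lra) end end.

Lemma ge_cont x : continuous ge x.
Proof. apply exd_cont. unfold ge. auto_derive. auto. Qed.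

Lemma ge_ex a b : ex_RInt ge a b.
Proof. apply exRc. intros; apply ge_cont. Qed.

Lemma Gi_deriv x : is_derive Gi x (ge x).
Proof.
  apply (is_derive_RInt ge Gi 0).
  - apply filter_forall. intros b. unfold Gi. apply RInt_correctR, ge_ex.
  - apply ge_cont.
Qed.

Lemma opt_pos t : 0 < 1 + t ^ 2.
Proof. nra. Qed.

Lemma uu_cont x t : continuous (uu x) t.
Proof. apply exd_cont. unfold uu. auto_derive. generalize (opt_pos t); lra. Qed.

Lemma uu_derive x t : is_derive (fun u => uu u t) x (-2 * x * exp (- (x ^ 2 * (1 + t ^ 2)))).
Proof.
  unfold uu. auto_derive. generalize (opt_pos t); lra.
  fix_exp. field. generalize (opt_pos t); lra.
Qed.

Lemma exp_cont_pt y : continuity_pt exp y.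
Proof. apply derivable_continuous_pt, derivable_pt_exp. Qed.

Lemma Ii_deriv x : is_derive Ii x (RInt (fun t => -2 * x * exp (- (x ^ 2 * (1 + t ^ 2)))) 0 1).
Proof.
  assert (H : is_derive Ii x (RInt (fun t => Derive (fun u => uu u t) x) 0 1)).
  { apply (is_derive_RInt_param uu 0 1 x).
    - apply filter_forall. intros x0 t _. eexists. apply uu_derive.
    - intros t _.
      apply continuity_2d_pt_ext with (f := fun u v => -2 * u * exp (- (u ^ 2 * (1 + v ^ 2)))).
      + intros u v. symmetry. apply is_derive_unique, uu_derive.
      + apply continuity_2d_pt_mult.
        * apply continuity_2d_pt_mult. apply continuity_2d_pt_const. apply continuity_2d_pt_id1.
        * apply continuity_1d_2d_pt_comp with (g := fun u v => - (u ^ 2 * (1 + v ^ 2))).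
          apply exp_cont_pt.
          apply continuity_2d_pt_opp, continuity_2d_pt_mult.
          -- simpl. apply continuity_2d_pt_mult. apply continuity_2d_pt_id1.
             apply continuity_2d_pt_mult. apply continuity_2d_pt_id1. apply continuity_2d_pt_const.
          -- apply continuity_2d_pt_plus. apply continuity_2d_pt_const.
             simpl. apply continuity_2d_pt_mult. apply continuity_2d_pt_id2.
             apply continuity_2d_pt_mult. apply continuity_2d_pt_id2. apply continuity_2d_pt_const.
    - apply filter_forall. intros y. apply exRc. intros; apply uu_cont. }
  replace (RInt (fun t => -2 * x * exp (- (x ^ 2 * (1 + t ^ 2)))) 0 1)
    with (RInt (fun t => Derive (fun u => uu u t) x) 0 1). exact H.
  apply RInt_ext. intros t _. apply is_derive_unique, uu_derive.
Qed.


Lemma Gi_lin x : Gi x = RInt (fun s => x * ge (x * s)) 0 1.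
Proof.
  unfold Gi.
  assert (H := RInt_comp_lin ge x 0 0 1 (ge_ex _ _)).
  replace (x * 0 + 0) with 0 in H by ring. replace (x * 1 + 0) with x in H by ring.
  rewrite <- H. apply RInt_ext. intros. unfold scal; simpl; unfold mult; simpl.
  f_equal. f_equal. ring.
Qed.

Lemma ex_cont_R (f : R -> R) a b : (forall z, continuous f z) -> ex_RInt f a b.
Proof. intros H; apply exRc; intros; apply H. Qed.

Definition hh x := Ii x + Gi x ^ 2.

Lemma hh_deriv (x : R) : is_derive hh x 0.
Proof.
  unfold hh.
  assert (H : is_derive (fun x => Ii x + Gi x ^ 2) x
     (RInt (fun t => -2 * x * exp (- (x ^ 2 * (1 + t ^ 2)))) 0 1 + 2 * Gi x * ge x)).
  { apply (is_derive_plus Ii (fun x => Gi x ^2)). apply Ii_deriv.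
    apply is_derive_ext with (f := fun x => Gi x * Gi x). intros; simpl; ring.
    replace (2 * Gi x * ge x) with (plus (scal (ge x) (Gi x)) (mult (Gi x) (ge x))).
    apply (is_derive_mult Gi Gi). apply Gi_deriv. apply Gi_deriv.
    intros; apply Rmult_comm.
    unfold plus, scal, mult; simpl; unfold mult; simpl; ring. }
  replace 0 with (RInt (fun t => -2 * x * exp (- (x ^ 2 * (1 + t ^ 2)))) 0 1 + 2 * Gi x * ge x).
  exact H.
  rewrite Gi_lin.
  assert (E : 2 * RInt (fun s => x * ge (x * s)) 0 1 * ge x
             = RInt (fun t => 2 * x * exp (- (x ^ 2 * (1 + t ^ 2)))) 0 1).
  { replace (2 * RInt (fun s => x * ge (x * s)) 0 1 * ge x) with (2 * ge x * RInt (fun s => x * ge (x * s)) 0 1) by ring.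
    assert (X1 : ex_RInt (fun s => x * ge (x * s)) 0 1).
    { apply ex_cont_R. intros z; apply exd_cont. unfold ge; auto_derive; auto. }
    assert (S := RInt_scal (fun s => x * ge (x * s)) 0 1 (2 * ge x) X1).
    unfold scal in S; simpl in S; unfold mult in S; simpl in S. rewrite <- S.
    apply RInt_ext. intros t _. unfold ge.
    replace (- (x ^ 2 * (1 + t ^ 2))) with (- x ^ 2 + - (x * t) ^ 2) by ring.
    rewrite exp_plus. rtype. ring. }
  rewrite E.
  assert (X2 : ex_RInt (fun t => 2 * x * exp (- (x ^ 2 * (1 + t ^ 2)))) 0 1).
  { apply ex_cont_R. intros z; apply exd_cont. auto_derive; auto. }
  assert (O : RInt (fun t => - (2 * x * exp (- (x ^ 2 * (1 + t ^ 2))))) 0 1 = - RInt (fun t => 2 * x * exp (- (x ^ 2 * (1 + t ^ 2)))) 0 1)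
    by exact (RInt_opp (fun t => 2 * x * exp (- (x ^ 2 * (1 + t ^ 2)))) 0 1 X2).
  replace (RInt (fun t => -2 * x * exp (- (x ^ 2 * (1 + t ^ 2)))) 0 1)
    with (RInt (fun t => - (2 * x * exp (- (x ^ 2 * (1 + t ^ 2))))) 0 1).
  rewrite O. ring.
  apply RInt_ext. intros; rtype; ring.
Qed.

Lemma deriv0_const (f : R -> R) a b : (forall x, is_derive f x 0) -> f a = f b.
Proof.
  intros H.
  destruct (MVT_gen f a b (fun _ => 0)) as [c [_ Hc]].
  - intros; apply H.
  - intros. apply continuity_pt_filterlim. apply exd_cont. eexists; apply H.
  - lra.
Qed.

Lemma hh0 : hh 0 = PI / 4.
Proof.
  unfold hh, Ii, Gi. rewrite RInt_point. unfold zero; simpl.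
  rewrite <- atan_1.
  replace (RInt (uu 0) 0 1) with (RInt (fun t => / (1 + t ^ 2)) 0 1).
  - rewrite (is_RInt_unique (fun t => / (1 + t ^ 2)) 0 1 (minus (atan 1) (atan 0))).
    rewrite atan_0. unfold minus, plus, opp; simpl. ring.
    apply (is_RInt_derive atan).
    + intros. apply is_derive_Reals, derivable_pt_lim_atan.
    + intros. apply exd_cont. auto_derive. generalize (opt_pos x); lra.
  - apply RInt_ext. intros. unfold uu. replace (- (0 ^ 2 * (1 + x ^ 2))) with 0 by ring.
    rewrite exp_0. rtype. field. generalize (opt_pos x); lra.
Qed.


Lemma exp_le a b : a <= b -> exp a <= exp b.
Proof. intros [H|H]. apply Rlt_le, exp_increasing, H. subst; lra. Qed.

Lemma Ii_bounds x : 0 <= Ii x <= exp (- x ^ 2).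
Proof.
  assert (X : ex_RInt (uu x) 0 1) by (apply ex_cont_R; intros; apply uu_cont).
  split.
  - unfold Ii. apply RInt_ge_0. lra. exact X. intros t _. unfold uu.
    apply Rmult_le_pos. apply Rlt_le, exp_pos. apply Rlt_le, Rinv_0_lt_compat, opt_pos.
  - unfold Ii.
    replace (exp (- x ^ 2)) with (RInt (fun _ => exp (- x ^ 2)) 0 1).
    apply RInt_le. lra. exact X. apply ex_cont_R. intros; apply continuous_const.
    intros t Ht. unfold uu.
    assert (E : exp (- (x ^ 2 * (1 + t ^ 2))) <= exp (- x ^ 2)).
    { apply exp_le. nra. }
    assert (P := opt_pos t). assert (Q := exp_pos (- (x ^ 2 * (1 + t ^ 2)))).
    unfold Rdiv. apply Rle_trans with (exp (- (x ^ 2 * (1 + t ^ 2)))); [|exact E].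
    rewrite <- (Rmult_1_r (exp _)) at 2. apply Rmult_le_compat_l. lra.
    rewrite <- Rinv_1. apply Rinv_le_contravar. lra. nra.
    rewrite RInt_const. unfold scal; simpl; unfold mult; simpl. ring.
Qed.

Lemma Gi_sq x : Gi x ^ 2 = PI / 4 - Ii x.
Proof.
  assert (H : hh x = hh 0) by (apply deriv0_const; apply hh_deriv).
  rewrite hh0 in H. unfold hh in H. lra.
Qed.

Lemma Gi_ge0 x : 0 <= x -> 0 <= Gi x.
Proof.
  intros Hx. unfold Gi. apply RInt_ge_0. lra. apply ge_ex.
  intros; unfold ge; apply Rlt_le, exp_pos.
Qed.

Lemma Gi_odd x : Gi (- x) = - Gi x.
Proof.
  unfold Gi.
  assert (H := RInt_comp_lin ge (-1) 0 0 x (ge_ex _ _)).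
  replace (-1 * 0 + 0) with 0 in H by ring. replace (-1 * x + 0) with (- x) in H by ring.
  rewrite <- H.
  assert (O : RInt (fun t => - ge t) 0 x = - RInt ge 0 x) by exact (RInt_opp ge 0 x (ge_ex _ _)).
  rewrite <- O. apply RInt_ext. intros. unfold scal; simpl; unfold mult; simpl.
  unfold ge. replace ((-1 * x0 + 0) ^ 2) with (x0 ^ 2) by ring. rtype; ring.
Qed.

Lemma sqrtPI_pos : 0 < sqrt PI.
Proof. apply sqrt_lt_R0, PI_RGT_0. Qed.

Lemma Gi_lim x : 0 <= x -> Rabs (Gi x - sqrt PI / 2) <= 2 * exp (- x ^ 2) / sqrt PI.
Proof.
  intros Hx.
  assert (S := sqrtPI_pos). assert (G := Gi_ge0 x Hx). assert (B := Ii_bounds x).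
  assert (Q := Gi_sq x).
  assert (SS : sqrt PI * sqrt PI = PI) by (apply sqrt_sqrt; generalize PI_RGT_0; lra).
  assert (E : Gi x - sqrt PI / 2 = - Ii x / (Gi x + sqrt PI / 2)).
  { field_simplify_eq. nra. lra. }
  rewrite E. unfold Rdiv. rewrite Rabs_mult, Rabs_Ropp, Rabs_right by lra.
  rewrite Rabs_right. 2: { apply Rle_ge, Rlt_le, Rinv_0_lt_compat; lra. }
  apply Rle_trans with (exp (- x ^ 2) * / (Gi x + sqrt PI / 2)).
  apply Rmult_le_compat_r. apply Rlt_le, Rinv_0_lt_compat; lra. lra.
  replace (2 * exp (- x ^ 2) * / sqrt PI) with (exp (- x ^ 2) * / (sqrt PI / 2)) by (field; lra).
  apply Rmult_le_compat_l. apply Rlt_le, exp_pos.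
  apply Rinv_le_contravar; lra.
Qed.


Lemma lim_p (f : R -> R) l K : (forall z, 1 <= z -> Rabs (f z - l) <= K / z) ->
  filterlim f (Rbar_locally p_infty) (locally l).
Proof.
  intros H. apply filterlim_locally. intros eps.
  exists (Rmax 1 (Rabs K / eps + 1)). intros z Hz.
  assert (H1 : 1 < z) by (eapply Rle_lt_trans; [apply Rmax_l|exact Hz]).
  assert (H2 : Rabs K / eps + 1 < z) by (eapply Rle_lt_trans; [apply Rmax_r|exact Hz]).
  assert (E := cond_pos eps).
  change (Rabs (f z - l) < eps).
  eapply Rle_lt_trans. apply H. lra.
  apply Rle_lt_trans with (Rabs K / z).
  unfold Rdiv. apply Rmult_le_compat_r. apply Rlt_le, Rinv_0_lt_compat; lra. apply RRle_abs.
  apply Rmult_lt_reg_r with z. lra. unfold Rdiv. rewrite Rmult_assoc, Rinv_l by lra.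
  assert (Rabs K / eps * eps = Rabs K) by (field; lra).
  assert (0 <= Rabs K) by apply Rabs_pos.
  nra.
Qed.

Lemma lim_m (f : R -> R) l K : (forall z, z <= -1 -> Rabs (f z - l) <= K / (- z)) ->
  filterlim f (Rbar_locally m_infty) (locally l).
Proof.
  intros H. apply filterlim_locally. intros eps.
  exists (- Rmax 1 (Rabs K / eps + 1)). intros z Hz.
  assert (H1 : 1 < - z) by (apply Rle_lt_trans with (Rmax 1 (Rabs K / eps + 1)); [apply Rmax_l|lra]).
  assert (H2 : Rabs K / eps + 1 < - z) by (apply Rle_lt_trans with (Rmax 1 (Rabs K / eps + 1)); [apply Rmax_r|lra]).
  assert (E := cond_pos eps).
  change (Rabs (f z - l) < eps).
  eapply Rle_lt_trans. apply H. lra.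
  apply Rle_lt_trans with (Rabs K / - z).
  unfold Rdiv. apply Rmult_le_compat_r. apply Rlt_le, Rinv_0_lt_compat; lra. apply RRle_abs.
  apply Rmult_lt_reg_r with (- z). lra. unfold Rdiv. rewrite Rmult_assoc, Rinv_l by lra.
  assert (Rabs K / eps * eps = Rabs K) by (field; lra).
  assert (0 <= Rabs K) by apply Rabs_pos.
  nra.
Qed.

Lemma exp_neg_bound y : 0 <= y -> exp (- y) <= / (1 + y).
Proof.
  intros Hy. assert (H := exp_ineq1_le y).
  assert (P := exp_pos y).
  rewrite exp_Ropp. apply Rinv_le_contravar; lra.
Qed.

Lemma expsq_bound z : 1 <= Rabs z -> exp (- z ^ 2 / 2) <= 2 / Rabs z /\ Rabs z * exp (- z ^ 2 / 2) <= 2 / Rabs z.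
Proof.
  intros Hz.
  assert (Z : z ^ 2 = Rabs z ^ 2) by (rewrite RPow_abs, Rabs_right; [ring| apply Rle_ge; nra]).
  assert (B : exp (- z ^ 2 / 2) <= / (1 + z ^ 2 / 2)).
  { replace (- z ^ 2 / 2) with (- (z ^ 2 / 2)) by field. apply exp_neg_bound. nra. }
  rewrite Z in B |- *. set (a := Rabs z) in *.
  assert (B2 : / (1 + a ^ 2 / 2) <= 2 / a ^ 2).
  { rewrite <- (Rinv_inv 2) at 2. unfold Rdiv. rewrite <- Rinv_mult.
    apply Rinv_le_contravar. nra. nra. }
  assert (E := exp_pos (- a ^ 2 / 2)).
  split.
  - apply Rle_trans with (2 / a ^ 2). lra.
    unfold Rdiv. apply Rmult_le_compat_l. lra. apply Rinv_le_contravar. lra. nra.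
  - replace (2 / a) with (a * (2 / a ^ 2)) by (field; lra).
    apply Rmult_le_compat_l. lra. lra.
Qed.


Definition Phic z := 1 / 2 + RInt phi 0 z.

Lemma phi_cont z : continuous phi z.
Proof. apply exd_cont. unfold phi. auto_derive. auto. Qed.

Lemma phi_ex a b : ex_RInt phi a b.
Proof. apply ex_cont_R. apply phi_cont. Qed.

Lemma s2pi_pos : 0 < sqrt (2 * PI).
Proof. apply sqrt_lt_R0. generalize PI_RGT_0; lra. Qed.

Lemma phi_pos z : 0 < phi z.
Proof. unfold phi. apply Rmult_lt_0_compat. apply Rinv_0_lt_compat, s2pi_pos. apply exp_pos. Qed.

Lemma phi_even z : phi (- z) = phi z.
Proof. unfold phi. replace ((- z) ^ 2) with (z ^ 2) by ring. reflexivity. Qed.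

Lemma phi_deriv z : is_derive phi z (- z * phi z).
Proof. unfold phi. auto_derive. auto. fix_exp. rtype. field. generalize s2pi_pos; lra. Qed.

Lemma sqrt2_pos : 0 < sqrt 2.
Proof. apply sqrt_lt_R0. lra. Qed.

Lemma RInt_phi z : RInt phi 0 z = Gi (z / sqrt 2) / sqrt PI.
Proof.
  assert (S2 := sqrt2_pos). assert (SP := sqrtPI_pos).
  assert (E2 : sqrt 2 * sqrt 2 = 2) by (apply sqrt_sqrt; lra).
  assert (EM : sqrt (2 * PI) = sqrt 2 * sqrt PI) by (apply sqrt_mult; generalize PI_RGT_0; lra).
  unfold Gi.
  assert (H := RInt_comp_lin ge (/ sqrt 2) 0 0 z (ge_ex _ _)).
  replace (/ sqrt 2 * 0 + 0) with 0 in H by ring. replace (/ sqrt 2 * z + 0) with (z / sqrt 2) in H by (field; lra).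
  rewrite <- H.
  assert (X : ex_RInt (fun y => scal (/ sqrt 2) (ge (/ sqrt 2 * y + 0))) 0 z).
  { apply ex_cont_R. intros w. apply exd_cont. unfold scal, ge; simpl; unfold mult; simpl. auto_derive. auto. }
  assert (SC : RInt (fun y => / sqrt PI * scal (/ sqrt 2) (ge (/ sqrt 2 * y + 0))) 0 z
     = / sqrt PI * RInt (fun y => scal (/ sqrt 2) (ge (/ sqrt 2 * y + 0))) 0 z)
   by exact (RInt_scal _ 0 z (/ sqrt PI) X).
  unfold Rdiv. rewrite Rmult_comm. etransitivity; [| exact SC].
  apply RInt_ext. intros x _. unfold scal; simpl; unfold mult; simpl. unfold phi, ge.
  rewrite EM. replace (- (/ sqrt 2 * x + 0) ^ 2) with (- x ^ 2 / 2).
  rtype. field. lra.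
  field_simplify_eq. replace (sqrt 2 ^ 2) with 2 by (simpl; lra). ring. lra.
Qed.

Lemma RInt_phi_deriv z : is_derive (fun b => RInt phi 0 b) z (phi z).
Proof.
  apply (is_derive_RInt phi (fun b => RInt phi 0 b) 0).
  - apply filter_forall. intros b. apply RInt_correctR, phi_ex.
  - apply phi_cont.
Qed.

Lemma Phic_deriv z : is_derive Phic z (phi z).
Proof.
  unfold Phic. replace (phi z) with (0 + phi z) by ring.
  exact (is_derive_plus (fun _ => 1 / 2) (fun b => RInt phi 0 b) z 0 (phi z) (is_derive_const _ _) (RInt_phi_deriv z)).
Qed.

Lemma Phic_sym z : Phic (- z) = 1 - Phic z.
Proof.
  unfold Phic. rewrite !RInt_phi. replace (- z / sqrt 2) with (- (z / sqrt 2)).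
  rewrite Gi_odd. field. generalize sqrtPI_pos; lra.
  field. generalize sqrt2_pos; lra.
Qed.

Lemma Phic_near1 z : 0 <= z -> Rabs (Phic z - 1) <= exp (- z ^ 2 / 2).
Proof.
  intros Hz. unfold Phic. rewrite RInt_phi.
  assert (S2 := sqrt2_pos). assert (SP := sqrtPI_pos).
  assert (L := Gi_lim (z / sqrt 2) ltac:(apply Rmult_le_pos; [lra| apply Rlt_le, Rinv_0_lt_compat; lra])).
  replace (1 / 2 + Gi (z / sqrt 2) / sqrt PI - 1) with ((Gi (z / sqrt 2) - sqrt PI / 2) / sqrt PI) by (field; lra).
  unfold Rdiv at 1. rewrite Rabs_mult, (Rabs_right (/ sqrt PI)) by (apply Rle_ge, Rlt_le, Rinv_0_lt_compat; lra).
  replace ((z / sqrt 2) ^ 2) with (z ^ 2 / 2) in L.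
  2: { field_simplify_eq. replace (sqrt 2 ^ 2) with 2 by (simpl; rewrite Rmult_1_r; symmetry; apply sqrt_sqrt; lra). ring. lra. }
  assert (SS : sqrt PI * sqrt PI = PI) by (apply sqrt_sqrt; generalize PI_RGT_0; lra).
  assert (P3 := PI2_3_2).
  assert (E := exp_pos (- z ^ 2 / 2)).
  replace (- (z ^ 2 / 2)) with (- z ^ 2 / 2) in L by field.
  apply Rle_trans with (2 * exp (- z ^ 2 / 2) / sqrt PI * / sqrt PI).
  apply Rmult_le_compat_r. apply Rlt_le, Rinv_0_lt_compat; lra. exact L.
  replace (2 * exp (- z ^ 2 / 2) / sqrt PI * / sqrt PI) with (2 / (sqrt PI * sqrt PI) * exp (- z ^ 2 / 2)) by (field; lra).
  rewrite SS.
  rewrite <- (Rmult_1_l (exp _)) at 2. apply Rmult_le_compat_r. lra.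
  apply Rmult_le_reg_r with PI. lra. unfold Rdiv. rewrite Rmult_assoc, Rinv_l; lra.
Qed.

Lemma Phic_lim_p : filterlim Phic (Rbar_locally p_infty) (locally 1).
Proof.
  apply lim_p with 2. intros z Hz.
  eapply Rle_trans. apply Phic_near1. lra.
  destruct (expsq_bound z) as [B _]. rewrite Rabs_right; lra.
  rewrite Rabs_right in B by lra. exact B.
Qed.

Lemma Phic_lim_m : filterlim Phic (Rbar_locally m_infty) (locally 0).
Proof.
  apply lim_m with 2. intros z Hz.
  replace (Phic z - 0) with (- (Phic (- z) - 1)).
  2: { rewrite Phic_sym. ring. }
  rewrite Rabs_Ropp.
  eapply Rle_trans. apply Phic_near1. lra.
  replace ((- z) ^ 2) with (z ^ 2) by ring.
  destruct (expsq_bound z) as [B _]. rewrite Rabs_left; lra.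
  rewrite Rabs_left in B by lra. exact B.
Qed.


Lemma at_point_lim (F : R -> R) x : filterlim F (at_point x) (locally (F x)).
Proof. intros P HP. unfold filtermap, at_point. apply locally_singleton. exact HP. Qed.

Lemma gen_left (F f : R -> R) x l : (forall u, is_derive F u (f u)) -> (forall u, continuous f u) ->
  filterlim F (Rbar_locally m_infty) (locally l) ->
  is_RInt_gen f (Rbar_locally m_infty) (at_point x) (F x - l).
Proof.
  intros D C L.
  apply is_RInt_gen_ext with (Derive F).
  - apply filter_forall. intros ab y _. apply is_derive_unique, D.
  - apply (is_RInt_gen_Derive (Fa := Rbar_locally m_infty) (Fb := at_point x) F l (F x)).
    + apply filter_forall. intros ab y _. eexists; apply D.
    + apply filter_forall. intros ab y _.
      apply continuous_ext with f. intros; symmetry; apply is_derive_unique, D. apply C.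
    + exact L.
    + apply at_point_lim.
Qed.

Lemma gen_right (F f : R -> R) x l : (forall u, is_derive F u (f u)) -> (forall u, continuous f u) ->
  filterlim F (Rbar_locally p_infty) (locally l) ->
  is_RInt_gen f (at_point x) (Rbar_locally p_infty) (l - F x).
Proof.
  intros D C L.
  apply is_RInt_gen_ext with (Derive F).
  - apply filter_forall. intros ab y _. apply is_derive_unique, D.
  - apply (is_RInt_gen_Derive (Fa := at_point x) (Fb := Rbar_locally p_infty) F (F x) l).
    + apply filter_forall. intros ab y _. eexists; apply D.
    + apply filter_forall. intros ab y _.
      apply continuous_ext with f. intros; symmetry; apply is_derive_unique, D. apply C.
    + apply at_point_lim.
    + exact L.
Qed.

Lemma RInt_gen_left (F f : R -> R) x l : (forall u, is_derive F u (f u)) -> (forall u, continuous f u) ->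
  filterlim F (Rbar_locally m_infty) (locally l) ->
  RInt_gen f (Rbar_locally m_infty) (at_point x) = F x - l.
Proof. intros D C L. apply is_RInt_gen_unique. apply gen_left; auto. Qed.

Lemma RInt_gen_right (F f : R -> R) x l : (forall u, is_derive F u (f u)) -> (forall u, continuous f u) ->
  filterlim F (Rbar_locally p_infty) (locally l) ->
  RInt_gen f (at_point x) (Rbar_locally p_infty) = l - F x.
Proof. intros D C L. apply is_RInt_gen_unique. apply gen_right; auto. Qed.

Lemma Phi_eq z : Phi z = Phic z.
Proof.
  unfold Phi. rewrite (RInt_gen_left Phic phi z 0). ring.
  apply Phic_deriv. apply phi_cont. apply Phic_lim_m.
Qed.


Lemma DPhic w : Derive (fun x => Phic x) w = phi w.
Proof. apply is_derive_unique, Phic_deriv. Qed.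
Lemma exPhic w : ex_derive (fun x => Phic x) w.
Proof. eexists; apply Phic_deriv. Qed.

Ltac fin_derive := repeat split; try apply exPhic; try rewrite !DPhic.

Lemma aff_m m s : 0 < s -> filterlim (fun u => (u - m) / s) (Rbar_locally m_infty) (Rbar_locally m_infty).
Proof.
  intros Hs P [M HM]. exists (M * s + m). intros u Hu. apply HM.
  apply Rmult_lt_reg_r with s. lra. unfold Rdiv. rewrite Rmult_assoc, Rinv_l; lra.
Qed.

Lemma aff_p m s : 0 < s -> filterlim (fun u => (u - m) / s) (Rbar_locally p_infty) (Rbar_locally p_infty).
Proof.
  intros Hs P [M HM]. exists (M * s + m). intros u Hu. apply HM.
  apply Rmult_lt_reg_r with s. lra. unfold Rdiv. rewrite Rmult_assoc, Rinv_l; lra.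
Qed.

Lemma phi_le z : phi z <= exp (- z ^ 2 / 2).
Proof.
  unfold phi. rewrite <- (Rmult_1_l (exp _)) at 2. apply Rmult_le_compat_r. apply Rlt_le, exp_pos.
  assert (1 <= sqrt (2 * PI)).
  { rewrite <- sqrt_1. apply sqrt_le_1_alt. generalize PI2_3_2; lra. }
  rewrite <- Rinv_1. apply Rinv_le_contravar; lra.
Qed.

Lemma phi_lim_p : filterlim phi (Rbar_locally p_infty) (locally 0).
Proof.
  apply lim_p with 2. intros z Hz. rewrite Rminus_0_r, Rabs_right by (apply Rle_ge, Rlt_le, phi_pos).
  eapply Rle_trans. apply phi_le. destruct (expsq_bound z) as [B _]. rewrite Rabs_right; lra.
  rewrite Rabs_right in B by lra. exact B.
Qed.

Lemma phi_lim_m : filterlim phi (Rbar_locally m_infty) (locally 0).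
Proof.
  apply lim_m with 2. intros z Hz. rewrite Rminus_0_r, Rabs_right by (apply Rle_ge, Rlt_le, phi_pos).
  eapply Rle_trans. apply phi_le. destruct (expsq_bound z) as [B _]. rewrite Rabs_left; lra.
  rewrite Rabs_left in B by lra. exact B.
Qed.

Definition F0 mu1 mu2 sigma theta u :=
  pi_plus mu1 mu2 sigma theta * Phic ((u - mu1) / sigma)
  + pi_minus mu1 mu2 sigma theta * Phic ((u - mu2) / sigma).
Definition F1 mu1 mu2 sigma theta u :=
  pi_plus mu1 mu2 sigma theta * (mu1 * Phic ((u - mu1) / sigma) - sigma * phi ((u - mu1) / sigma))
  + pi_minus mu1 mu2 sigma theta * (mu2 * Phic ((u - mu2) / sigma) - sigma * phi ((u - mu2) / sigma)).

Lemma F0_deriv mu1 mu2 sigma theta u : 0 < sigma ->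
  is_derive (F0 mu1 mu2 sigma theta) u (qdens mu1 mu2 sigma theta u).
Proof.
  intros Hs. unfold F0, qdens, npdf. auto_derive. fin_derive.
  fin_derive. replace ((u + - mu1) * / sigma) with ((u - mu1) / sigma) by (rtype; field; lra).
  replace ((u + - mu2) * / sigma) with ((u - mu2) / sigma) by (field; lra). rtype; ring.
Qed.

Lemma F1_deriv mu1 mu2 sigma theta u : 0 < sigma ->
  is_derive (F1 mu1 mu2 sigma theta) u (u * qdens mu1 mu2 sigma theta u).
Proof.
  intros Hs. unfold F1, qdens, npdf. unfold phi at 1 2. auto_derive. fin_derive.
  fin_derive. replace ((u + - mu1) * / sigma) with ((u - mu1) / sigma) by (rtype; field; lra).
  replace ((u + - mu2) * / sigma) with ((u - mu2) / sigma) by (field; lra). unfold phi. fix_exp. rtype. field.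
  split. generalize s2pi_pos; lra. lra.
Qed.


Lemma islim_m (f : R -> R) (l : R) : filterlim f (Rbar_locally m_infty) (locally l) -> is_lim f m_infty l.
Proof. auto. Qed.
Lemma islim_p (f : R -> R) (l : R) : filterlim f (Rbar_locally p_infty) (locally l) -> is_lim f p_infty l.
Proof. auto. Qed.
Lemma islim_m' (f : R -> R) (l : R) : is_lim f m_infty l -> filterlim f (Rbar_locally m_infty) (locally l).
Proof. auto. Qed.
Lemma islim_p' (f : R -> R) (l : R) : is_lim f p_infty l -> filterlim f (Rbar_locally p_infty) (locally l).
Proof. auto. Qed.

Lemma scal_lim (f : R -> R) a x l : is_lim f x (Finite l) -> is_lim (fun y => a * f y) x (a * l).
Proof. intros H. exact (is_lim_scal_l f a x l H). Qed.

Lemma F0_lim_m mu1 mu2 sigma theta : 0 < sigma ->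
  filterlim (F0 mu1 mu2 sigma theta) (Rbar_locally m_infty) (locally 0).
Proof.
  intros Hs. apply islim_m'. unfold F0.
  replace 0 with (pi_plus mu1 mu2 sigma theta * 0 + pi_minus mu1 mu2 sigma theta * 0) by ring.
  apply is_lim_plus'; apply scal_lim; apply islim_m;
  exact (filterlim_comp _ _ _ _ _ _ _ _ (aff_m _ _ Hs) Phic_lim_m).
Qed.

Lemma F0_lim_p mu1 mu2 sigma theta : 0 < sigma ->
  filterlim (F0 mu1 mu2 sigma theta) (Rbar_locally p_infty) (locally 1).
Proof.
  intros Hs. apply islim_p'. unfold F0.
  replace 1 with (pi_plus mu1 mu2 sigma theta * 1 + pi_minus mu1 mu2 sigma theta * 1) by (unfold pi_minus; ring).
  apply is_lim_plus'; apply scal_lim; apply islim_p;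
  exact (filterlim_comp _ _ _ _ _ _ _ _ (aff_p _ _ Hs) Phic_lim_p).
Qed.

Lemma F1_lim_m mu1 mu2 sigma theta : 0 < sigma ->
  filterlim (F1 mu1 mu2 sigma theta) (Rbar_locally m_infty) (locally 0).
Proof.
  intros Hs. apply islim_m'. unfold F1.
  replace 0 with (pi_plus mu1 mu2 sigma theta * (mu1 * 0 - sigma * 0) + pi_minus mu1 mu2 sigma theta * (mu2 * 0 - sigma * 0)) by ring.
  apply is_lim_plus'; apply scal_lim; apply is_lim_minus'; apply scal_lim; apply islim_m.
  exact (filterlim_comp _ _ _ _ _ _ _ _ (aff_m _ _ Hs) Phic_lim_m).
  exact (filterlim_comp _ _ _ _ _ _ _ _ (aff_m _ _ Hs) phi_lim_m).
  exact (filterlim_comp _ _ _ _ _ _ _ _ (aff_m _ _ Hs) Phic_lim_m).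
  exact (filterlim_comp _ _ _ _ _ _ _ _ (aff_m _ _ Hs) phi_lim_m).
Qed.

Lemma F1_lim_p mu1 mu2 sigma theta : 0 < sigma ->
  filterlim (F1 mu1 mu2 sigma theta) (Rbar_locally p_infty)
    (locally (pi_plus mu1 mu2 sigma theta * mu1 + pi_minus mu1 mu2 sigma theta * mu2)).
Proof.
  intros Hs. apply islim_p'. unfold F1.
  replace (pi_plus mu1 mu2 sigma theta * mu1 + pi_minus mu1 mu2 sigma theta * mu2)
   with (pi_plus mu1 mu2 sigma theta * (mu1 * 1 - sigma * 0) + pi_minus mu1 mu2 sigma theta * (mu2 * 1 - sigma * 0)) by ring.
  apply is_lim_plus'; apply scal_lim; apply is_lim_minus'; apply scal_lim; apply islim_p.
  exact (filterlim_comp _ _ _ _ _ _ _ _ (aff_p _ _ Hs) Phic_lim_p).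
  exact (filterlim_comp _ _ _ _ _ _ _ _ (aff_p _ _ Hs) phi_lim_p).
  exact (filterlim_comp _ _ _ _ _ _ _ _ (aff_p _ _ Hs) Phic_lim_p).
  exact (filterlim_comp _ _ _ _ _ _ _ _ (aff_p _ _ Hs) phi_lim_p).
Qed.

Lemma qdens_cont mu1 mu2 sigma theta u : continuous (qdens mu1 mu2 sigma theta) u.
Proof. apply exd_cont. unfold qdens, npdf, phi. auto_derive. auto. Qed.

Lemma uqdens_cont mu1 mu2 sigma theta u : continuous (fun u => u * qdens mu1 mu2 sigma theta u) u.
Proof. apply exd_cont. unfold qdens, npdf, phi. auto_derive. auto. Qed.

Lemma muL_eq mu1 mu2 sigma theta : 0 < sigma ->
  muL mu1 mu2 sigma theta = F1 mu1 mu2 sigma theta theta / F0 mu1 mu2 sigma theta theta.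
Proof.
  intros Hs. unfold muL.
  rewrite (RInt_gen_left (F1 mu1 mu2 sigma theta) _ theta 0).
  rewrite (RInt_gen_left (F0 mu1 mu2 sigma theta) _ theta 0).
  rewrite !Rminus_0_r. reflexivity.
  intros; apply F0_deriv; auto. apply qdens_cont. apply F0_lim_m; auto.
  intros; apply F1_deriv; auto. intros; apply uqdens_cont. apply F1_lim_m; auto.
Qed.

Lemma muR_eq mu1 mu2 sigma theta : 0 < sigma ->
  muR mu1 mu2 sigma theta =
   (pi_plus mu1 mu2 sigma theta * mu1 + pi_minus mu1 mu2 sigma theta * mu2 - F1 mu1 mu2 sigma theta theta)
   / (1 - F0 mu1 mu2 sigma theta theta).
Proof.
  intros Hs. unfold muR.
  rewrite (RInt_gen_right (F1 mu1 mu2 sigma theta) _ theta (pi_plus mu1 mu2 sigma theta * mu1 + pi_minus mu1 mu2 sigma theta * mu2)).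
  rewrite (RInt_gen_right (F0 mu1 mu2 sigma theta) _ theta 1).
  reflexivity.
  intros; apply F0_deriv; auto. apply qdens_cont. apply F0_lim_p; auto.
  intros; apply F1_deriv; auto. intros; apply uqdens_cont. apply F1_lim_p; auto.
Qed.


Definition gc mu1 mu2 sigma theta :=
  (F1 mu1 mu2 sigma theta theta / F0 mu1 mu2 sigma theta theta +
   (pi_plus mu1 mu2 sigma theta * mu1 + pi_minus mu1 mu2 sigma theta * mu2 - F1 mu1 mu2 sigma theta theta)
   / (1 - F0 mu1 mu2 sigma theta theta)) / 2.

Lemma g_eq mu1 mu2 sigma theta : 0 < sigma -> g mu1 mu2 sigma theta = gc mu1 mu2 sigma theta.
Proof. intros Hs. unfold g, gc. rewrite muL_eq, muR_eq; auto. Qed.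

Lemma Dphi w : Derive (fun x => phi x) w = - w * phi w.
Proof. apply is_derive_unique, phi_deriv. Qed.
Lemma exphi w : ex_derive (fun x => phi x) w.
Proof. eexists; apply phi_deriv. Qed.

Ltac simp_ts x :=
  repeat match goal with |- context [exp ?a] => assert_fails (constr_eq a 0); replace a with 0 by (field; lra) end;
  rewrite ?exp_0;
  repeat match goal with |- context [Phic ?b] => assert_fails (constr_eq b x); assert_fails (constr_eq b (-x));
     first [replace b with x by (unfold x; field; lra) | replace b with (-x) by (unfold x; field; lra)] end;
  repeat match goal with |- context [phi ?b] => assert_fails (constr_eq b x); assert_fails (constr_eq b (-x));
     first [replace b with x by (unfold x; field; lra) | replace b with (-x) by (unfold x; field; lra)] end;
  repeat match goal with |- context [Derive (fun x0 => Phic x0) ?b] => assert_fails (constr_eq b x); assert_fails (constr_eq b (-x));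
     first [replace b with x by (unfold x; field; lra) | replace b with (-x) by (unfold x; field; lra)] end;
  repeat match goal with |- context [Derive (fun x0 => phi x0) ?b] => assert_fails (constr_eq b x); assert_fails (constr_eq b (-x));
     first [replace b with x by (unfold x; field; lra) | replace b with (-x) by (unfold x; field; lra)] end;
  rewrite ?DPhic, ?Dphi, ?Phic_sym, ?phi_even.

Lemma gc_deriv mu1 mu2 sigma : mu1 < mu2 -> 0 < sigma ->
  is_derive (gc mu1 mu2 sigma) (theta_star mu1 mu2) (Crate ((mu2 - mu1) / (2 * sigma))).
Proof.
  intros H12 Hs.
  set (x := (mu2 - mu1) / (2 * sigma)).
  unfold gc, F0, F1, pi_minus, pi_plus, theta_star.
  auto_derive.
  - simp_ts x. repeat split; try apply exPhic; try apply exphi; try lra;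
    match goal with |- ?a <> 0 => replace a with (1/2) by (rtype; field); lra end.
  - simp_ts x. unfold Crate. rewrite !Phi_eq, Phic_sym.
    assert (Hm : mu2 = mu1 + 2 * sigma * x) by (unfold x; field; lra).
    clearbody x. subst mu2. set (P := Phic x). set (p := phi x).
    rtype. field. lra.
Qed.

Lemma gc_fix mu1 mu2 sigma : mu1 < mu2 -> 0 < sigma ->
  gc mu1 mu2 sigma (theta_star mu1 mu2) = theta_star mu1 mu2.
Proof.
  intros H12 Hs.
  set (x := (mu2 - mu1) / (2 * sigma)).
  unfold gc, F0, F1, pi_minus, pi_plus, theta_star.
  simp_ts x.
  assert (Hm : mu2 = mu1 + 2 * sigma * x) by (unfold x; field; lra).
  clearbody x. subst mu2. replace (1 / (1 + 1) * Phic x + (1 - 1 / (1 + 1)) * (1 - Phic x)) with (1 / 2) by field. rtype. field.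
Qed.

Lemma g_deriv mu1 mu2 sigma : mu1 < mu2 -> 0 < sigma ->
  is_derive (g mu1 mu2 sigma) (theta_star mu1 mu2) (Crate ((mu2 - mu1) / (2 * sigma))).
Proof.
  intros H12 Hs. apply is_derive_ext with (gc mu1 mu2 sigma).
  intros t; symmetry; apply g_eq; auto. apply gc_deriv; auto.
Qed.

Lemma g_fix mu1 mu2 sigma : mu1 < mu2 -> 0 < sigma ->
  g mu1 mu2 sigma (theta_star mu1 mu2) = theta_star mu1 mu2.
Proof. intros; rewrite g_eq; auto. apply gc_fix; auto. Qed.


Lemma mult_lim (f g : R -> R) x (a b : R) : is_lim f x a -> is_lim g x b -> is_lim (fun y => f y * g y) x (a * b).
Proof. intros H1 H2. exact (is_lim_mult f g x a b H1 H2 I). Qed.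

Lemma inc_ge0 (f df : R -> R) : (forall t, is_derive f t (df t)) -> (forall t, 0 <= df t) ->
  is_lim f m_infty 0 -> forall x, 0 <= f x.
Proof.
  intros D P L x.
  assert (M : forall a b, a <= b -> f a <= f b).
  { intros a b Hab. destruct (MVT_gen f a b df) as [c [_ Hc]].
    - intros; apply D.
    - intros. apply continuity_pt_filterlim. apply exd_cont. eexists; apply D.
    - assert (0 <= df c * (b - a)) by (apply Rmult_le_pos; [apply P|lra]). lra. }
  destruct (Rle_or_lt 0 (f x)) as [H|H]; auto.
  exfalso.
  assert (L' := islim_m' f 0 L).
  apply filterlim_locally with (eps := mkposreal (- f x / 2) ltac:(lra)) in L'.
  destruct L' as [Mx HM].
  set (t := Rmin (Mx - 1) x).
  assert (Ht : t < Mx) by (unfold t; generalize (Rmin_l (Mx - 1) x); lra).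
  assert (Ht2 : t <= x) by (unfold t; apply Rmin_r).
  specialize (HM t Ht). change (Rabs (f t - 0) < - f x / 2) in HM.
  specialize (M t x Ht2).
  rewrite Rminus_0_r in HM. apply Rabs_def2 in HM. lra.
Qed.

Lemma inc_gt0 (f df : R -> R) : (forall t, is_derive f t (df t)) -> (forall t, 0 < df t) ->
  is_lim f m_infty 0 -> forall x, 0 < f x.
Proof.
  intros D P L x.
  assert (G := inc_ge0 f df D (fun t => Rlt_le _ _ (P t)) L (x - 1)).
  destruct (MVT_gen f (x - 1) x df) as [c [_ Hc]].
  - intros; apply D.
  - intros. apply continuity_pt_filterlim. apply exd_cont. eexists; apply D.
  - assert (0 < df c * (x - (x - 1))) by (apply Rmult_lt_0_compat; [apply P|lra]). lra.
Qed.

Lemma mono_le (f df : R -> R) a b : (forall t, is_derive f t (df t)) -> (forall t, a <= t <= b -> df t <= 0) ->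
  a <= b -> f b <= f a.
Proof.
  intros D P Hab. destruct (MVT_gen f a b df) as [c [Hc1 Hc]].
  - intros; apply D.
  - intros. apply continuity_pt_filterlim. apply exd_cont. eexists; apply D.
  - rewrite Rmin_left, Rmax_right in Hc1 by lra.
    assert (df c * (b - a) <= 0).
    { apply Rmult_le_0_r. apply P; lra. lra. }
    lra.
Qed.

Lemma expsq_bound2 z : 1 <= Rabs z -> z ^ 2 * exp (- z ^ 2 / 2) <= 16 / Rabs z.
Proof.
  intros Hz.
  assert (Z : z ^ 2 = Rabs z ^ 2) by (rewrite RPow_abs, Rabs_right; [ring| apply Rle_ge; nra]).
  rewrite Z. set (a := Rabs z) in *.
  assert (E : exp (a ^ 2 / 2) = exp (a ^ 2 / 4) * exp (a ^ 2 / 4)) by (rewrite <- exp_plus; f_equal; field).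
  assert (I1 := exp_ineq1_le (a ^ 2 / 4)).
  assert (I2 : (a ^ 2 / 4) ^ 2 <= exp (a ^ 2 / 2)) by (rewrite E; nra).
  replace (- a ^ 2 / 2) with (- (a ^ 2 / 2)) by field. rewrite exp_Ropp.
  assert (P := exp_pos (a ^ 2 / 2)).
  apply Rmult_le_reg_r with (exp (a ^ 2 / 2)). lra.
  rewrite Rmult_assoc, Rinv_l by lra. rewrite Rmult_1_r.
  apply Rmult_le_reg_r with a. lra.
  replace (16 / a * exp (a ^ 2 / 2) * a) with (16 * exp (a ^ 2 / 2)) by (field; lra).
  assert (a ^ 2 * a <= (a ^ 2 / 4) ^ 2 * 16) by nra. lra.
Qed.

Lemma Phic_small z : z <= 0 -> Rabs (Phic z) <= exp (- z ^ 2 / 2).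
Proof.
  intros Hz. replace (Phic z) with (- (Phic (- z) - 1)) by (rewrite Phic_sym; ring).
  rewrite Rabs_Ropp. replace (z ^ 2) with ((- z) ^ 2) by ring. apply Phic_near1. lra.
Qed.

Lemma lim_Phic : is_lim Phic m_infty 0.
Proof. apply islim_m. apply Phic_lim_m. Qed.
Lemma lim_phi : is_lim phi m_infty 0.
Proof. apply islim_m. apply phi_lim_m. Qed.

Lemma lim_zphi : is_lim (fun z => z * phi z) m_infty 0.
Proof.
  apply islim_m. apply lim_m with 2. intros z Hz. rewrite Rminus_0_r.
  destruct (expsq_bound z) as [_ B]. rewrite Rabs_left; lra.
  rewrite Rabs_left in B by lra. rewrite Rabs_mult, Rabs_left by lra.
  rewrite Rabs_right by (apply Rle_ge, Rlt_le, phi_pos).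
  eapply Rle_trans; [|exact B]. apply Rmult_le_compat_l. lra. apply phi_le.
Qed.

Lemma lim_zPhic : is_lim (fun z => z * Phic z) m_infty 0.
Proof.
  apply islim_m. apply lim_m with 2. intros z Hz. rewrite Rminus_0_r.
  destruct (expsq_bound z) as [_ B]. rewrite Rabs_left; lra.
  rewrite Rabs_left in B by lra. rewrite Rabs_mult, Rabs_left by lra.
  eapply Rle_trans; [|exact B]. apply Rmult_le_compat_l. lra. apply Phic_small. lra.
Qed.

Lemma lim_z2Phic : is_lim (fun z => z ^ 2 * Phic z) m_infty 0.
Proof.
  apply islim_m. apply lim_m with 16. intros z Hz. rewrite Rminus_0_r.
  assert (B := expsq_bound2 z). rewrite Rabs_left in B by lra.
  rewrite Rabs_mult, Rabs_right by (apply Rle_ge; nra).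
  eapply Rle_trans; [|apply B; lra]. apply Rmult_le_compat_l. nra. apply Phic_small. lra.
Qed.


Definition Af x := phi x + x * Phic x.

Lemma Af_deriv x : is_derive Af x (Phic x).
Proof. unfold Af. auto_derive. split; [apply exphi|split; [apply exPhic|auto]].
  rewrite DPhic, Dphi. rtype; ring. Qed.

Lemma DAf w : Derive (fun x => Af x) w = Phic w.
Proof. apply is_derive_unique, Af_deriv. Qed.

Lemma Phic_pos x : 0 < Phic x.
Proof. apply (inc_gt0 Phic phi Phic_deriv phi_pos lim_Phic). Qed.

Lemma Af_lim : is_lim Af m_infty 0.
Proof. unfold Af. replace 0 with (0 + 0) by ring. apply is_lim_plus'. apply lim_phi. apply lim_zPhic. Qed.

Lemma Af_pos x : 0 < Af x.
Proof. apply (inc_gt0 Af Phic Af_deriv Phic_pos Af_lim). Qed.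

Definition rf x := Phic x + x ^ 2 * Phic x + x * phi x.

Lemma rf_deriv x : is_derive rf x (2 * Af x).
Proof. unfold rf, Af. auto_derive. repeat split; try apply exphi; try apply exPhic.
  rewrite DPhic, Dphi. rtype; ring. Qed.

Lemma rf_lim : is_lim rf m_infty 0.
Proof. unfold rf. replace 0 with (0 + 0 + 0) by ring. apply is_lim_plus'. apply is_lim_plus'.
  apply lim_Phic. apply lim_z2Phic. apply lim_zphi. Qed.

Lemma rf_ge0 x : 0 <= rf x.
Proof. apply (inc_ge0 rf (fun x => 2 * Af x) rf_deriv). intros t; generalize (Af_pos t); lra. apply rf_lim. Qed.

Definition mf x := Phic x ^ 2 - phi x ^ 2 - x * phi x * Phic x.

Lemma mf_deriv x : is_derive mf x (phi x * rf x).
Proof. unfold mf, rf. auto_derive. repeat split; try apply exphi; try apply exPhic.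
  rewrite DPhic, Dphi. rtype; ring. Qed.

Lemma mf_lim : is_lim mf m_infty 0.
Proof.
  unfold mf. replace 0 with (0 * 0 - 0 * 0 - 0 * 0) by ring.
  apply is_lim_minus'. apply is_lim_minus'.
  - apply is_lim_ext with (fun x => Phic x * Phic x). intros; simpl; ring. apply mult_lim; apply lim_Phic.
  - apply is_lim_ext with (fun x => phi x * phi x). intros; simpl; ring. apply mult_lim; apply lim_phi.
  - apply mult_lim. apply lim_zphi. apply lim_Phic.
Qed.

Lemma mf_ge0 x : 0 <= mf x.
Proof.
  apply (inc_ge0 mf (fun x => phi x * rf x) mf_deriv).
  intros t. apply Rmult_le_pos. apply Rlt_le, phi_pos. apply rf_ge0. apply mf_lim.
Qed.

Definition kf x := Phic x / Af x.

Lemma kf_deriv x : is_derive kf x (- mf x / Af x ^ 2).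
Proof.
  assert (P := Af_pos x).
  unfold kf, Af. unfold Af in P. auto_derive. repeat split; try apply exphi; try apply exPhic; lra.
  rewrite DPhic, Dphi. unfold mf. rtype; field. lra.
Qed.

Lemma kf_le y : 0 <= y -> kf y <= kf (- y).
Proof.
  intros Hy. apply (mono_le kf (fun x => - mf x / Af x ^ 2)). apply kf_deriv.
  intros t _. assert (M := mf_ge0 t). assert (P := Af_pos t).
  assert (0 <= mf t / Af t ^ 2).
  { unfold Rdiv; apply Rmult_le_pos; [lra| apply Rlt_le, Rinv_0_lt_compat; nra]. }
  replace (- mf t / Af t ^ 2) with (- (mf t / Af t ^ 2)) by (field; lra). lra. lra.
Qed.

Definition Lf y := Af y * Af (- y).

Lemma Lf_deriv y : is_derive Lf y (Phic y * Af (- y) - Af y * Phic (- y)).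
Proof.
  unfold Lf.
  assert (D2 : is_derive (fun y => Af (- y)) y (- Phic (- y))).
  { auto_derive. eexists; apply Af_deriv.
    rewrite DAf. rtype; ring. }
  assert (H := is_derive_mult Af (fun y => Af (- y)) y (Phic y) (- Phic (- y)) (Af_deriv y) D2 (fun n m => Rmult_comm n m)).
  unfold plus, scal, mult in H; simpl in H; unfold mult in H; simpl in H.
  replace (Phic y * Af (- y) - Af y * Phic (- y)) with (Phic y * Af (- y) + Af y * - Phic (- y)) by ring.
  exact H.
Qed.

Lemma Lf_le y : 0 <= y -> Lf y <= Lf 0.
Proof.
  intros Hy. apply (mono_le Lf _ 0 y Lf_deriv); auto.
  intros t [Ht _]. assert (K := kf_le t Ht). unfold kf in K.
  assert (P1 := Af_pos t). assert (P2 := Af_pos (- t)).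
  apply (Rmult_le_compat_r (Af t * Af (- t))) in K. 2: nra.
  replace (Phic t / Af t * (Af t * Af (- t))) with (Phic t * Af (- t)) in K by (field; lra).
  replace (Phic (- t) / Af (- t) * (Af t * Af (- t))) with (Af t * Phic (- t)) in K by (field; lra).
  lra.
Qed.

Lemma Crate_Lf y : Crate y = 4 * Lf y.
Proof. unfold Crate, Lf, Af. rewrite !Phi_eq, phi_even. ring. Qed.

Lemma phi0_sq : phi 0 ^ 2 = / (2 * PI).
Proof.
  unfold phi. replace (- 0 ^ 2 / 2) with 0 by field. rewrite exp_0.
  assert (S := s2pi_pos). assert (E : sqrt (2 * PI) * sqrt (2 * PI) = 2 * PI) by (apply sqrt_sqrt; generalize PI_RGT_0; lra).
  replace ((/ sqrt (2 * PI) * 1) ^ 2) with (/ (sqrt (2 * PI) * sqrt (2 * PI))) by (field; lra).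
  rewrite E. reflexivity.
Qed.

Lemma Crate0 : Crate 0 = 2 / PI.
Proof.
  rewrite Crate_Lf. unfold Lf, Af. replace (- 0) with 0 by ring.
  replace ((phi 0 + 0 * Phic 0) * (phi 0 + 0 * Phic 0)) with (phi 0 ^ 2) by ring.
  rewrite phi0_sq. field. generalize PI_RGT_0; lra.
Qed.

Lemma Crate_bounds y : 0 <= y -> 0 < Crate y <= 2 / PI.
Proof.
  intros Hy. split.
  - rewrite Crate_Lf. unfold Lf. assert (P1 := Af_pos y). assert (P2 := Af_pos (- y)). nra.
  - rewrite <- Crate0, !Crate_Lf. assert (H := Lf_le y Hy). lra.
Qed.


Lemma contraction (f : R -> R) t0 C c : f t0 = t0 -> is_derive f t0 C -> 0 < C -> C < c ->
  exists delta, 0 < delta /\ forall theta, Rabs (theta - t0) < delta -> Rabs (f theta - t0) <= c * Rabs (theta - t0).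
Proof.
  intros F D HC Hc. apply is_derive_Reals in D.
  destruct (D (c - C) ltac:(lra)) as [d Hd].
  exists d. split. apply cond_pos. intros theta Ht.
  destruct (Req_dec theta t0) as [E|E].
  - subst. rewrite F, Rminus_diag, Rabs_R0. lra.
  - set (h := theta - t0). assert (Hh : h <> 0) by (unfold h; lra).
    specialize (Hd h Hh Ht). replace (t0 + h) with theta in Hd by (unfold h; ring).
    rewrite F in Hd.
    assert (Q : f theta - t0 = h * ((f theta - t0) / h)) by (field; auto).
    rewrite Q, Rabs_mult. fold h. rewrite Rmult_comm.
    apply Rmult_le_compat_r. apply Rabs_pos.
    apply Rabs_def2 in Hd. destruct Hd.
    apply Rabs_le. lra.
Qed.

Theorem proposition1 (mu1 mu2 sigma : R) :
  mu1 < mu2 -> 0 < sigma ->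
  let ts := theta_star mu1 mu2 in
  let x := (mu2 - mu1) / (2 * sigma) in
  g mu1 mu2 sigma ts = ts /\
  is_derive (g mu1 mu2 sigma) ts (Crate x) /\
  Crate x = 4 * (phi x ^ 2 + phi x * x * (2 * Phi x - 1)
                 - x ^ 2 * Phi x * (1 - Phi x)) /\
  (forall y, 0 <= y -> 0 < Crate y <= 2 / PI) /\
  Crate 0 = 2 / PI /\ 2 / PI < 1 /\
  (forall c, 2 / PI < c < 1 ->
     exists delta, 0 < delta /\
       forall theta, Rabs (theta - ts) < delta ->
         Rabs (g mu1 mu2 sigma theta - ts) <= c * Rabs (theta - ts)).
Proof.
  intros H12 Hs ts x.
  assert (Hx : 0 <= x) by (unfold x; apply Rmult_le_pos; [lra| apply Rlt_le, Rinv_0_lt_compat; lra]).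
  assert (PI3 := PI2_3_2).
  split. apply g_fix; auto.
  split. apply g_deriv; auto.
  split. unfold Crate. rewrite !Phi_eq, Phic_sym. ring.
  split. apply Crate_bounds.
  split. apply Crate0.
  split. apply Rmult_lt_reg_r with PI. lra. unfold Rdiv. rewrite Rmult_assoc, Rinv_l; lra.
  intros c Hc. destruct (Crate_bounds x Hx) as [B1 B2].
  apply contraction with (Crate x); auto. apply g_fix; auto. apply g_deriv; auto. lra.
Qed.
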